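(* Under the standing assumptions, the following hold. (9) $\{M^{(1,2)}\}\subseteq\{C^{-1}B^{(1)}A^{-1}\}$; and $\{M^{(1,2)}\}\supseteq\{C^{-1}B^{(1)}A^{-1}\}\Leftrightarrow\{M^{(1,2)}\}=\{C^{-1}B^{(1)}A^{-1}\}\Leftrightarrow r(B)=m$ or $r(B)=n$. (10) $\{M^{(1,2)}\}=\{C^{-1}B^{(1,2)}A^{-1}\}$. (11) $\{M^{(1,2)}\}\cap\{C^{-1}B^{(1,3)}A^{-1}\}\neq\emptyset$; $\{M^{(1,2)}\}\supseteq\{C^{-1}B^{(1,3)}A^{-1}\}\Leftrightarrow r(B)=m$ or $r(B)=n$; $\{M^{(1,2)}\}\subseteq\{C^{-1}B^{(1,3)}A^{-1}\}\Leftrightarrow B=0$ or $r(B)=m$; $\{M^{(1,2)}\}=\{C^{-1}B^{(1,3)}A^{-1}\}\Leftrightarrow r(B)=m$. (12) $\{M^{(1,2)}\}\cap\{C^{-1}B^{(1,4)}A^{-1}\}\neq\emptyset$; $\{M^{(1,2)}\}\supseteq\{C^{-1}B^{(1,4)}A^{-1}\}\Leftrightarrow r(B)=m$ or $r(B)=n$; $\{M^{(1,2)}\}\subseteq\{C^{-1}B^{(1,4)}A^{-1}\}\Leftrightarrow B=0$ or $r(B)=n$; $\{M^{(1,2)}\}=\{C^{-1}B^{(1,4)}A^{-1}\}\Leftrightarrow r(B)=n$. (13) $\{M^{(1,2)}\}\supseteq\{C^{-1}B^{(1,2,3)}A^{-1}\}$; and $\{M^{(1,2)}\}\subseteq\{C^{-1}B^{(1,2,3)}A^{-1}\}\Leftrightarrow\{M^{(1,2)}\}=\{C^{-1}B^{(1,2,3)}A^{-1}\}\Leftrightarrow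 B=0$ or $r(B)=m$. (14) $\{M^{(1,2)}\}\supseteq\{C^{-1}B^{(1,2,4)}A^{-1}\}$; and $\{M^{(1,2)}\}\subseteq\{C^{-1}B^{(1,2,4)}A^{-1}\}\Leftrightarrow\{M^{(1,2)}\}=\{C^{-1}B^{(1,2,4)}A^{-1}\}\Leftrightarrow B=0$ or $r(B)=n$. (15) $\{M^{(1,2)}\}\cap\{C^{-1}B^{(1,3,4)}A^{-1}\}\neq\emptyset$; $\{M^{(1,2)}\}\supseteq\{C^{-1}B^{(1,3,4)}A^{-1}\}\Leftrightarrow r(B)=m$ or $r(B)=n$; $\{M^{(1,2)}\}\subseteq\{C^{-1}B^{(1,3,4)}A^{-1}\}\Leftrightarrow B=0$ or $r(B)=m=n$; $\{M^{(1,2)}\}=\{C^{-1}B^{(1,3,4)}A^{-1}\}\Leftrightarrow r(B)=m=n$. (16) $C^{-1}B^\dagger A^{-1}\in\{M^{(1,2)}\}$.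
   Context: Standing assumptions: $m,n\ge1$; $A\in\mathbb{C}^{m\times m}$ and $C\in\mathbb{C}^{n\times n}$ are nonsingular; $B\in\mathbb{C}^{m\times n}$; $M=ABC$. For a complex matrix $X$, $X^*$ is its conjugate transpose, $r(X)$ its rank and $\mathscr{R}(X)$ its column space. For $X\in\mathbb{C}^{p\times q}$, a matrix $G\in\mathbb{C}^{q\times p}$ is called an $\{i,\ldots,j\}$-generalized inverse of $X$ (written $X^{(i,\ldots,j)}$) if it satisfies the equations numbered $i,\ldots,j$ among the four Penrose equations (i) $XGX=X$, (ii) $GXG=G$, (iii) $(XG)^*=XG$, (iv) $(GX)^*=GX$; $\{X^{(i,\ldots,j)}\}$ denotes the set of all such $G$. The Moore–Penrose inverse $X^\dagger$ is the unique matrix satisfying all four equations. For a type $(k,\ldots,l)$, $\{C^{-1}B^{(k,\ldots,l)}A^{-1}\}:=\{C^{-1}GA^{-1}: G\in\{B^{(k,\ldots,l)}\}\}$. *)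

(* Defs.v *)
(* Complex matrices are modelled over an arbitrary
   numClosedFieldType R (algebraically closed field with conjugation and
   norm, e.g. algC). *)
From HB Require Import structures.
From mathcomp Require Import all_boot all_order all_algebra.
Set Implicit Arguments. Unset Strict Implicit. Unset Printing Implicit Defensive.
Import Order.TTheory GRing.Theory Num.Theory.
Local Open Scope ring_scope.

Definition ctmx (R : numClosedFieldType) (p q : nat) (X : 'M[R]_(p, q)) : 'M[R]_(q, p) :=
  (map_mx (fun z => z^*) X)^T.

Definition penrose (R : numClosedFieldType) (p q : nat) (i : nat)
  (X : 'M[R]_(p, q)) (G : 'M[R]_(q, p)) : Prop :=
  match i with
  | 1%N => X *m G *m X = X
  | 2%N => G *m X *m G = G
  | 3%N => ctmx (X *m G) = X *m G
  | 4%N => ctmx (G *m X) = G *m X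
  | _ => True
  end.

Definition ginv (R : numClosedFieldType) (p q : nat) (t : seq nat)
  (X : 'M[R]_(p, q)) (G : 'M[R]_(q, p)) : Prop :=
  forall i, i \in t -> penrose i X G.

Definition is_MP (R : numClosedFieldType) (p q : nat)
  (X : 'M[R]_(p, q)) (G : 'M[R]_(q, p)) : Prop :=
  ginv [:: 1; 2; 3; 4]%N X G.

Definition rev_set (R : numClosedFieldType) (m n : nat) (t : seq nat)
  (A : 'M[R]_m) (B : 'M[R]_(m, n)) (C : 'M[R]_n) (G : 'M[R]_(n, m)) : Prop :=
  exists G0, ginv t B G0 /\ G = invmx C *m G0 *m invmx A.

Definition msub (T : Type) (S1 S2 : T -> Prop) : Prop := forall x, S1 x -> S2 x.
Definition meq (T : Type) (S1 S2 : T -> Prop) : Prop := forall x, S1 x <-> S2 x.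
Definition mmeet (T : Type) (S1 S2 : T -> Prop) : Prop := exists x, S1 x /\ S2 x.

(* Main.v *)
Require Import Defs.
From HB Require Import structures.
From mathcomp Require Import all_boot all_order all_algebra.
From Stdlib Require Import Classical FunctionalExtensionality PropExtensionality.
Set Implicit Arguments. Unset Strict Implicit. Unset Printing Implicit Defensive.
Import Order.TTheory GRing.Theory Num.Theory.
Local Open Scope ring_scope.
Section CT.
Variable R : numClosedFieldType.

Lemma ctmxE p q (X : 'M[R]_(p,q)) : ctmx X = (map_mx Num.conj X)^T.
Proof. by []. Qed.

Lemma ctmxK p q (X : 'M[R]_(p,q)) : ctmx (ctmx X) = X.
Proof. by apply/matrixP=> i j; rewrite !ctmxE !mxE conjCK. Qed.

Lemma ctmxM p q s (X : 'M[R]_(p,q)) (Y : 'M[R]_(q,s)) :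
  ctmx (X *m Y) = ctmx Y *m ctmx X.
Proof. by rewrite !ctmxE map_mxM trmx_mul. Qed.

Lemma ctmxD p q (X Y : 'M[R]_(p,q)) : ctmx (X + Y) = ctmx X + ctmx Y.
Proof. by rewrite !ctmxE map_mxD linearD. Qed.

Lemma ctmx1 p : ctmx (1%:M : 'M[R]_p) = 1%:M.
Proof. by rewrite ctmxE map_mx1 trmx1. Qed.

Lemma ctmx0 p q : ctmx (0 : 'M[R]_(p,q)) = 0.
Proof. by rewrite ctmxE map_mx0 trmx0. Qed.

Lemma ctmx_inv p (X : 'M[R]_p) : ctmx (invmx X) = invmx (ctmx X).
Proof. by rewrite !ctmxE map_invmx trmx_inv. Qed.

Lemma mxrank_ctmx p q (X : 'M[R]_(p,q)) : \rank (ctmx X) = \rank X.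
Proof. by rewrite ctmxE mxrank_tr mxrank_map. Qed.

Lemma ctmx_pos p q (Z : 'M[R]_(p,q)) : ctmx Z *m Z = 0 -> Z = 0.
Proof.
move=> H; apply/matrixP=> i j; rewrite mxE.
have := congr1 (fun M : 'M[R]_q => M j j) H; rewrite !mxE => S.
have Hz : (Z i j)^* * Z i j = 0.
  apply: (@psumr_eq0P _ _ xpredT (fun k => (Z k j)^* * Z k j)) => //.
  - by move=> k _; rewrite mulrC mul_conjC_ge0.
  - rewrite -[RHS]S; apply: eq_bigr => k _; by rewrite !mxE.
by move/eqP: Hz; rewrite mulrC mul_conjC_eq0 => /eqP.
Qed.

Lemma gram_unit p q (F : 'M[R]_(p,q)) : row_full F -> (ctmx F *m F) \in unitmx.
Proof.
move=> /row_fullP [L HL]; rewrite -row_free_unit; apply: inj_row_free => v Hv.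
have HZ : F *m ctmx v = 0.
  apply: ctmx_pos; rewrite ctmxM ctmxK mulmxA -(mulmxA v) Hv.
  by rewrite mul0mx.
have : ctmx v = 0 by rewrite -[ctmx v]mul1mx -HL -mulmxA HZ mulmx0.
by move=> H0; rewrite -[v]ctmxK H0 ctmx0.
Qed.

Lemma herm_sand p q (F : 'M[R]_(p,q)) (G : 'M[R]_q) :
  ctmx G = G -> ctmx (F *m G *m ctmx F) = F *m G *m ctmx F.
Proof. by move=> HG; rewrite !ctmxM ctmxK HG mulmxA. Qed.

Lemma MP_fact m n r (F : 'M[R]_(m,r)) (K : 'M[R]_(r,n)) :
  row_full F -> row_free K -> exists Bd, is_MP (F *m K) Bd.
Proof.
move=> fF fK.
have uF : (ctmx F *m F) \in unitmx by apply: gram_unit.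
have uK : (K *m ctmx K) \in unitmx.
  rewrite -{1}[K]ctmxK; apply: gram_unit.
  by rewrite /row_full mxrank_ctmx.
set G1 := invmx (ctmx F *m F); set G2 := invmx (K *m ctmx K).
have hG1 : ctmx G1 = G1 by rewrite /G1 ctmx_inv ctmxM ctmxK.
have hG2 : ctmx G2 = G2 by rewrite /G2 ctmx_inv ctmxM ctmxK.
have V2 : K *m ctmx K *m G2 = 1%:M by apply: mulmxV.
have V1 : G1 *m (ctmx F *m F) = 1%:M by apply: mulVmx.
exists (ctmx K *m G2 *m G1 *m ctmx F).
have E1 : F *m K *m (ctmx K *m G2 *m G1 *m ctmx F) = F *m G1 *m ctmx F.
  by rewrite !mulmxA -(mulmxA F K) -(mulmxA F) V2 mulmx1.
have E2 : (ctmx K *m G2 *m G1 *m ctmx F) *m (F *m K) = ctmx K *m G2 *m K.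
  by rewrite !mulmxA -(mulmxA _ (ctmx F)) -(mulmxA _ G1) V1 mulmx1.
move=> [|[|[|[|[|i]]]]] //= _.
- by rewrite E1 !mulmxA -(mulmxA _ (ctmx F)) -(mulmxA _ G1) V1 mulmx1.
- by rewrite E2 !mulmxA -(mulmxA _ K) -(mulmxA _ (K *m ctmx K)) V2 mulmx1.
- by rewrite E1; apply: herm_sand.
- by rewrite E2; have := herm_sand (ctmx K) hG2; rewrite ctmxK.
Qed.

Lemma MP_exists m n (B : 'M[R]_(m,n)) : exists Bd, is_MP B Bd.
Proof.
have := MP_fact (col_base_full B) (row_base_free B).
by rewrite mulmx_base.
Qed.

Lemma ginv_cons p q i t (X : 'M[R]_(p,q)) G :
  ginv (i :: t) X G <-> penrose i X G /\ ginv t X G.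
Proof.
split.
- move=> H; split; first by apply: H; rewrite inE eqxx.
  by move=> j jt; apply: H; rewrite inE jt orbT.
- case=> H1 H2 j; rewrite inE => /orP [/eqP -> // | ]; exact: H2.
Qed.

Lemma ginv_nil p q (X : 'M[R]_(p,q)) G : ginv [::] X G.
Proof. by []. Qed.

Lemma ginv_sub p q t1 t2 (X : 'M[R]_(p,q)) G :
  all (fun i => i \in t1) t2 -> ginv t1 X G -> ginv t2 X G.
Proof. by move=> /allP H g i it; apply: g; apply: H. Qed.

Lemma nz_entry p q (X : 'M[R]_(p,q)) : X != 0 -> exists i j, X i j != 0.
Proof.
move=> nz; case: (boolP [exists i, exists j, X i j != 0]).
  by move=> /existsP [i /existsP [j h]]; exists i, j.
move=> /existsPn H; case/eqP: nz; apply/matrixP => i j.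
by have := H i; rewrite negb_exists => /forallP /(_ j); rewrite negbK mxE => /eqP.
Qed.

Lemma nz_prod p q s t (P : 'M[R]_(p,q)) (Q : 'M[R]_(s,t)) :
  P != 0 -> Q != 0 -> exists W : 'M[R]_(q,s), P *m W *m Q != 0.
Proof.
move=> /nz_entry [i [j hP]] /nz_entry [k [l hQ]].
exists (delta_mx j (0 : 'I_1) *m delta_mx 0 k).
have -> : P *m (delta_mx j (0 : 'I_1) *m delta_mx 0 k) *m Q = col j P *m row k Q.
  by rewrite colE rowE !mulmxA.
apply/eqP => /matrixP /(_ i l); rewrite !mxE big_ord1 !mxE => /eqP.
by rewrite mulf_eq0 (negbTE hP) (negbTE hQ).
Qed.

Section BL.
Variables (m n : nat) (B : 'M[R]_(m,n)) (Bd : 'M[R]_(n,m)).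
Hypothesis hMP : is_MP B Bd.

Let P1 : B *m Bd *m B = B := @hMP 1%N isT.
Let P2 : Bd *m B *m Bd = Bd := @hMP 2%N isT.
Let P3 : ctmx (B *m Bd) = B *m Bd := @hMP 3%N isT.
Let P4 : ctmx (Bd *m B) = Bd *m B := @hMP 4%N isT.

Let BP0 : B *m (1%:M - Bd *m B) = 0.
Proof. by rewrite mulmxBr mulmx1 mulmxA P1 subrr. Qed.
Let QB0 : (1%:M - B *m Bd) *m B = 0.
Proof. by rewrite mulmxBl mul1mx P1 subrr. Qed.
Let BdBP0 : Bd *m B *m (1%:M - Bd *m B) = 0.
Proof. by rewrite mulmxBr mulmx1 mulmxA P2 subrr. Qed.

Let P_ne0 : (\rank B < n)%N -> 1%:M - Bd *m B != 0.
Proof.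
move=> lt; apply/eqP => /eqP; rewrite subr_eq0 => /eqP E.
by have := mxrankM_maxr Bd B; rewrite -E mxrank1 leqNgt lt.
Qed.
Let Q_ne0 : (\rank B < m)%N -> 1%:M - B *m Bd != 0.
Proof.
move=> lt; apply/eqP => /eqP; rewrite subr_eq0 => /eqP E.
by have := mxrankM_maxl B Bd; rewrite -E mxrank1 leqNgt lt.
Qed.

Lemma counter2 : (\rank B < m)%N -> (\rank B < n)%N ->
  exists H, ginv [:: 1; 3; 4]%N B H /\ ~ ginv [:: 1; 2]%N B H.
Proof.
move=> ltm ltn.
have [W nzW] := nz_prod (P_ne0 ltn) (Q_ne0 ltm).
set X := (1%:M - Bd *m B) *m W *m (1%:M - B *m Bd) in nzW.
have BH : B *m (Bd + X) = B *m Bd.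
  by rewrite mulmxDr /X !mulmxA BP0 !mul0mx addr0.
have HB : (Bd + X) *m B = Bd *m B.
  by rewrite mulmxDl /X -(mulmxA _ (1%:M - B *m Bd) B) QB0 mulmx0 addr0.
exists (Bd + X); split.
  apply/ginv_cons; split; first by rewrite /= BH.
  apply/ginv_cons; split; first by rewrite /= BH.
  apply/ginv_cons; split; first by rewrite /= HB.
  exact: ginv_nil.
move=> /ginv_cons [_ /ginv_cons [/= h2 _]].
move: h2; rewrite HB mulmxDr P2.
have -> : Bd *m B *m X = 0 by rewrite /X !mulmxA BdBP0 !mul0mx.
rewrite addr0 => h.
have E : X = 0 by apply: (addrI Bd); rewrite -h addr0.
by rewrite E eqxx in nzW.
Qed.
Lemma counter3 : B != 0 -> (\rank B < m)%N ->
  exists H, ginv [:: 1; 2]%N B H /\ ~ penrose 3 B H.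
Proof.
move=> nzB ltm.
have [W nzW] := nz_prod nzB (Q_ne0 ltm).
set X := B *m W *m (1%:M - B *m Bd) in nzW.
have BBdX : B *m Bd *m X = X by rewrite /X !mulmxA P1.
have XB : X *m B = 0.
  by rewrite /X -(mulmxA _ (1%:M - B *m Bd) B) QB0 mulmx0.
have BH : B *m (Bd + Bd *m X) = B *m Bd + X.
  by rewrite mulmxDr mulmxA BBdX.
have HB : (Bd + Bd *m X) *m B = Bd *m B.
  by rewrite mulmxDl -mulmxA XB mulmx0 addr0.
exists (Bd + Bd *m X); split.
  apply/ginv_cons; split.
    by rewrite /= BH mulmxDl P1 XB addr0.
  apply/ginv_cons; split; last exact: ginv_nil.
  by rewrite /= HB mulmxDr P2 mulmxA P2.
rewrite /= BH ctmxD P3 => h.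
have cX : ctmx X = X by apply: (addrI (B *m Bd)).
have : X = 0.
  by rewrite -cX -BBdX ctmxM P3 cX mulmxA XB mul0mx.
by move=> E; rewrite E eqxx in nzW.
Qed.

Lemma counter4 : B != 0 -> (\rank B < n)%N ->
  exists H, ginv [:: 1; 2]%N B H /\ ~ penrose 4 B H.
Proof.
move=> nzB ltn.
have [W nzW] := nz_prod (P_ne0 ltn) nzB.
set Y := (1%:M - Bd *m B) *m W *m B in nzW.
have YBdB : Y *m Bd *m B = Y.
  by rewrite /Y -!mulmxA (mulmxA B Bd B) P1.
have BY : B *m Y = 0 by rewrite /Y !mulmxA BP0 !mul0mx.
have BH : B *m (Bd + Y *m Bd) = B *m Bd.
  by rewrite mulmxDr mulmxA BY mul0mx addr0.
have HB : (Bd + Y *m Bd) *m B = Bd *m B + Y.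
  by rewrite mulmxDl YBdB.
exists (Bd + Y *m Bd); split.
  apply/ginv_cons; split.
    by rewrite /= BH P1.
  apply/ginv_cons; split; last exact: ginv_nil.
  by rewrite /= -mulmxA BH mulmxDl !mulmxA P2 YBdB.
rewrite /= HB ctmxD P4 => h.
have cY : ctmx Y = Y by apply: (addrI (Bd *m B)).
have : Y = 0.
  by rewrite -cY -YBdB -mulmxA ctmxM P4 cY /Y !mulmxA BdBP0 !mul0mx.
by move=> E; rewrite E eqxx in nzW.
Qed.
End BL.

Section Pos.
Variables (m n : nat) (B : 'M[R]_(m,n)).

Lemma full_m H : \rank B = m -> B *m H *m B = B -> B *m H = 1%:M.
Proof.
move=> r h; have : row_free B by rewrite /row_free r.
case/row_freeP => Rr hR.
by rewrite -[B *m H]mulmx1 -hR mulmxA h.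
Qed.

Lemma full_n H : \rank B = n -> B *m H *m B = B -> H *m B = 1%:M.
Proof.
move=> r h; have : row_full B by rewrite /row_full r.
case/row_fullP => L hL.
by rewrite -[H *m B]mul1mx -hL -mulmxA (mulmxA B H B) h.
Qed.

Lemma inc1 H : (\rank B = m \/ \rank B = n) ->
  ginv [:: 1]%N B H -> ginv [:: 1; 2]%N B H.
Proof.
move=> e /ginv_cons [h1 _]; apply/ginv_cons; split => //.
apply/ginv_cons; split; last exact: ginv_nil.
rewrite /=; case: e => e.
  by rewrite -mulmxA (full_m e h1) mulmx1.
by rewrite (full_n e h1) mul1mx.
Qed.

Lemma pen3_of H : (B = 0 \/ \rank B = m) -> penrose 1 B H -> penrose 3 B H.
Proof.
rewrite /=; case => [-> _ | e h1]; first by rewrite mul0mx ctmx0.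
by rewrite (full_m e h1) ctmx1.
Qed.

Lemma pen4_of H : (B = 0 \/ \rank B = n) -> penrose 1 B H -> penrose 4 B H.
Proof.
rewrite /=; case => [-> _ | e h1]; first by rewrite mulmx0 ctmx0.
by rewrite (full_n e h1) ctmx1.
Qed.
End Pos.
End CT.
Section Main.
Variables (R : numClosedFieldType) (m n : nat) (B : 'M[R]_(m,n)).
Hypotheses (hm : (0 < m)%N) (hn : (0 < n)%N).

Let r := \rank B.
Let Q t := ginv t B.

Lemma gsub t1 t2 H : ginv t1 B H -> all (fun i => i \in t1) t2 -> ginv t2 B H.
Proof. by move=> h a; apply: ginv_sub a h. Qed.

Lemma msub_meq (T : Type) (P S : T -> Prop) : msub P S ->
  (msub S P <-> meq P S) /\ (meq P S <-> msub S P).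
Proof.
move=> h; have e : msub S P <-> meq P S.
  split=> h' x; first by split; [apply: h | apply: h'].
  exact: (proj2 (h' x)).
by split=> //; split; apply e.
Qed.

Lemma lt_of_ne a b : (a <= b)%N -> a <> b -> (a < b)%N.
Proof. by move=> le ne; rewrite ltn_neqAle le andbT; apply/eqP. Qed.

Lemma L_sup t : (forall H, Q [:: 1; 3; 4]%N H -> Q t H) ->
  (forall H, Q t H -> Q [:: 1]%N H) ->
  (msub (Q t) (Q [:: 1; 2]%N) <-> (r = m \/ r = n)).
Proof.
move=> h1 h2; split; last by move=> e H /h2; apply: inc1.
move=> h; case: (classic (r = m \/ r = n)) => // ne.
have ltm : (r < m)%N by apply: lt_of_ne; [exact: rank_leq_row | move=> e; apply: ne; left].
have ltn : (r < n)%N by apply: lt_of_ne; [exact: rank_leq_col | move=> e; apply: ne; right].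
have [Bd hBd] := MP_exists B.
have [H [hH nH]] := counter2 hBd ltm ltn.
by exfalso; apply: nH; apply: h; apply: h1.
Qed.

Lemma L_sub3 t : (forall H, Q t H -> penrose 3 B H) ->
  (forall H, Q [:: 1; 2]%N H -> penrose 3 B H -> Q t H) ->
  (msub (Q [:: 1; 2]%N) (Q t) <-> (B = 0 \/ r = m)).
Proof.
move=> h1 h2; split; last first.
  move=> e H hH; apply: h2 => //; apply: pen3_of e _.
  by case/ginv_cons: hH.
move=> h; case: (classic (B = 0 \/ r = m)) => // ne.
have nzB : B != 0 by apply/eqP => e; apply: ne; left.
have ltm : (r < m)%N by apply: lt_of_ne; [exact: rank_leq_row | move=> e; apply: ne; right].
have [Bd hBd] := MP_exists B.
have [H [hH nH]] := counter3 hBd nzB ltm.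
by exfalso; apply: nH; apply: h1; apply: h.
Qed.

Lemma L_sub4 t : (forall H, Q t H -> penrose 4 B H) ->
  (forall H, Q [:: 1; 2]%N H -> penrose 4 B H -> Q t H) ->
  (msub (Q [:: 1; 2]%N) (Q t) <-> (B = 0 \/ r = n)).
Proof.
move=> h1 h2; split; last first.
  move=> e H hH; apply: h2 => //; apply: pen4_of e _.
  by case/ginv_cons: hH.
move=> h; case: (classic (B = 0 \/ r = n)) => // ne.
have nzB : B != 0 by apply/eqP => e; apply: ne; left.
have ltn : (r < n)%N by apply: lt_of_ne; [exact: rank_leq_col | move=> e; apply: ne; right].
have [Bd hBd] := MP_exists B.
have [H [hH nH]] := counter4 hBd nzB ltn.
by exfalso; apply: nH; apply: h1; apply: h.
Qed.

Lemma r0 : B = 0 -> r = 0%N.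
Proof. by move=> e; rewrite /r e mxrank0. Qed.

Lemma thmB :
  (msub (Q [:: 1; 2]%N) (Q [:: 1]%N) /\
   (msub (Q [:: 1]%N) (Q [:: 1; 2]%N) <-> meq (Q [:: 1; 2]%N) (Q [:: 1]%N)) /\
   (meq (Q [:: 1; 2]%N) (Q [:: 1]%N) <-> (r = m \/ r = n))) /\
  meq (Q [:: 1; 2]%N) (Q [:: 1; 2]%N) /\
  (mmeet (Q [:: 1; 2]%N) (Q [:: 1; 3]%N) /\
   (msub (Q [:: 1; 3]%N) (Q [:: 1; 2]%N) <-> (r = m \/ r = n)) /\
   (msub (Q [:: 1; 2]%N) (Q [:: 1; 3]%N) <-> (B = 0 \/ r = m)) /\
   (meq (Q [:: 1; 2]%N) (Q [:: 1; 3]%N) <-> r = m)) /\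
  (mmeet (Q [:: 1; 2]%N) (Q [:: 1; 4]%N) /\
   (msub (Q [:: 1; 4]%N) (Q [:: 1; 2]%N) <-> (r = m \/ r = n)) /\
   (msub (Q [:: 1; 2]%N) (Q [:: 1; 4]%N) <-> (B = 0 \/ r = n)) /\
   (meq (Q [:: 1; 2]%N) (Q [:: 1; 4]%N) <-> r = n)) /\
  (msub (Q [:: 1; 2; 3]%N) (Q [:: 1; 2]%N) /\
   (msub (Q [:: 1; 2]%N) (Q [:: 1; 2; 3]%N) <-> meq (Q [:: 1; 2]%N) (Q [:: 1; 2; 3]%N)) /\
   (meq (Q [:: 1; 2]%N) (Q [:: 1; 2; 3]%N) <-> (B = 0 \/ r = m))) /\
  (msub (Q [:: 1; 2; 4]%N) (Q [:: 1; 2]%N) /\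
   (msub (Q [:: 1; 2]%N) (Q [:: 1; 2; 4]%N) <-> meq (Q [:: 1; 2]%N) (Q [:: 1; 2; 4]%N)) /\
   (meq (Q [:: 1; 2]%N) (Q [:: 1; 2; 4]%N) <-> (B = 0 \/ r = n))) /\
  (mmeet (Q [:: 1; 2]%N) (Q [:: 1; 3; 4]%N) /\
   (msub (Q [:: 1; 3; 4]%N) (Q [:: 1; 2]%N) <-> (r = m \/ r = n)) /\
   (msub (Q [:: 1; 2]%N) (Q [:: 1; 3; 4]%N) <-> (B = 0 \/ (r = m /\ m = n))) /\
   (meq (Q [:: 1; 2]%N) (Q [:: 1; 3; 4]%N) <-> (r = m /\ m = n))) /\
  ((exists Bd, is_MP B Bd) /\
   forall Bd, is_MP B Bd -> Q [:: 1; 2]%N Bd).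
Proof.
have [Bd hBd] := MP_exists B.
have mp12 : Q [:: 1; 2]%N Bd by apply: gsub hBd _.
have s12_1 : msub (Q [:: 1; 2]%N) (Q [:: 1]%N) by move=> H h; apply: gsub h _.
have meet t : all (fun i => i \in [:: 1; 2; 3; 4]%N) t -> mmeet (Q [:: 1; 2]%N) (Q t).
  by move=> a; exists Bd; split => //; apply: gsub hBd a.
have sup t : all (fun i => i \in t) [:: 1]%N -> all (fun i => i \in [:: 1; 3; 4]%N) t ->
    (msub (Q t) (Q [:: 1; 2]%N) <-> (r = m \/ r = n)).
  move=> a1 a2; apply: L_sup => H h; [exact: gsub h a2 | exact: gsub h a1].
have e3 t : all (fun i => i \in t) [:: 1; 3]%N -> all (fun i => i \in [:: 1; 2; 3]%N) t ->
    (msub (Q [:: 1; 2]%N) (Q t) <-> (B = 0 \/ r = m)).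
  move=> a1 a2; apply: L_sub3 => [H h | H h h3].
    by have /ginv_cons [_ /ginv_cons [h3 _]] := gsub h a1.
  apply: gsub a2; apply/ginv_cons; split; first by case/ginv_cons: h.
  apply/ginv_cons; split; first by case/ginv_cons: h => _ /ginv_cons [].
  by apply/ginv_cons; split.
have e4 t : all (fun i => i \in t) [:: 1; 4]%N -> all (fun i => i \in [:: 1; 2; 4]%N) t ->
    (msub (Q [:: 1; 2]%N) (Q t) <-> (B = 0 \/ r = n)).
  move=> a1 a2; apply: L_sub4 => [H h | H h h4].
    by have /ginv_cons [_ /ginv_cons [h4 _]] := gsub h a1.
  apply: gsub a2; apply/ginv_cons; split; first by case/ginv_cons: h.
  apply/ginv_cons; split; first by case/ginv_cons: h => _ /ginv_cons [].
  by apply/ginv_cons; split.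
have mn0 : ~ (0%N = m \/ 0%N = n).
  by case=> e; [move: hm | move: hn]; rewrite -e.
have meq_iff (P S : 'M[R]_(n,m) -> Prop) (X Y Z : Prop) :
    (msub S P <-> X) -> (msub P S <-> Y) -> ((X /\ Y) <-> Z) -> (meq P S <-> Z).
  move=> hX hY hZ; split.
    move=> h; apply/hZ; split; [apply/hX | apply/hY]; move=> x; apply h.
  move=> /hZ [/hX a /hY b] x; split; [exact: b | exact: a].
have triv (P S : 'M[R]_(n,m) -> Prop) : msub P S -> (msub P S <-> True) by [].
split.
  have [h1 h2] := msub_meq s12_1.
  split => //; split => //.
  apply: meq_iff; [exact: sup | exact: triv | tauto].
split; first by move=> x.
split.
  split; first exact: meet.
  split; first exact: sup.
  split; first exact: e3.
  apply: meq_iff; [exact: sup | exact: e3 |].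
  split; last by move=> e; split; [left | right].
  case=> [[e|e] [/r0 e'|//]] //; exfalso; apply: mn0; right; rewrite -e -e' //.
split.
  split; first exact: meet.
  split; first exact: sup.
  split; first exact: e4.
  apply: meq_iff; [exact: sup | exact: e4 |].
  split; last by move=> e; split; right.
  case=> [[e|e] [/r0 e'|//]] //; exfalso; apply: mn0; left; rewrite -e -e' //.
split.
  have s123 : msub (Q [:: 1; 2; 3]%N) (Q [:: 1; 2]%N) by move=> H h; apply: gsub h _.
  split => //; split.
    by split => [h x | h x]; [split; [apply: h | apply: s123] | exact: (proj1 (h x))].
  apply: meq_iff; [exact: triv | exact: e3 | tauto].
split.
  have s124 : msub (Q [:: 1; 2; 4]%N) (Q [:: 1; 2]%N) by move=> H h; apply: gsub h _.
  split => //; split.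
    by split => [h x | h x]; [split; [apply: h | apply: s124] | exact: (proj1 (h x))].
  apply: meq_iff; [exact: triv | exact: e4 | tauto].
have e34 : msub (Q [:: 1; 2]%N) (Q [:: 1; 3; 4]%N) <-> (B = 0 \/ (r = m /\ m = n)).
  split.
    move=> h; have h3 : msub (Q [:: 1; 2]%N) (Q [:: 1; 3]%N).
      by move=> x /h hx; apply: gsub hx _.
    have h4 : msub (Q [:: 1; 2]%N) (Q [:: 1; 4]%N).
      by move=> x /h hx; apply: gsub hx _.
    move/(e3 [:: 1; 3]%N isT isT): h3 => [->|rm]; first by left.
    move/(e4 [:: 1; 4]%N isT isT): h4 => [->|rn]; first by left.
    by right; split => //; rewrite -rm -rn.
  move=> e H h.
  have p1 : penrose 1 B H by case/ginv_cons: h.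
  apply/ginv_cons; split => //.
  apply/ginv_cons; split.
    by apply: pen3_of p1; case: e => [->|[]]; [left|right].
  apply/ginv_cons; split; last exact: ginv_nil.
  by apply: pen4_of p1; case: e => [->|[rm mn]]; [left|right; exact: (etrans rm mn)].
split.
  split; first exact: meet.
  split; first exact: sup.
  split; first exact: e34.
  apply: meq_iff; [exact: sup | exact: e34 |].
  split; last by move=> [rm mn]; split; [left | right].
  case=> [e [/r0 e'|//]]; exfalso; apply: mn0; case: e => e; [left|right];
    rewrite -e -e' //.
split; first by exists Bd.
by move=> G hG; apply: gsub hG _.
Qed.

End Main.
Section Tr.
Variables (R : numClosedFieldType) (m n : nat)
  (A : 'M[R]_m) (B : 'M[R]_(m, n)) (C : 'M[R]_n).
Hypotheses (hA : A \in unitmx) (hC : C \in unitmx).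

Definition phi (G : 'M[R]_(n,m)) := C *m G *m A.
Definition psi (H : 'M[R]_(n,m)) := invmx C *m H *m invmx A.

Lemma phiK H : phi (psi H) = H.
Proof.
by rewrite /phi /psi !mulmxA mulmxV // mul1mx -mulmxA mulVmx // mulmx1.
Qed.
Lemma psiK G : psi (phi G) = G.
Proof.
by rewrite /phi /psi !mulmxA mulVmx // mul1mx -mulmxA mulmxV // mulmx1.
Qed.

Lemma canc2 p q (U : 'M[R]_p) (V : 'M[R]_q) (Y Z : 'M[R]_(p,q)) :
  U \in unitmx -> V \in unitmx -> U *m Y *m V = U *m Z *m V -> Y = Z.
Proof.
move=> hU hV /(can_inj (mulmxK hV)) /(can_inj (mulKmx hU)) //.
Qed.

Lemma E12 : ginv [:: 1; 2]%N (A *m B *m C) = ginv [:: 1; 2]%N B \o phi.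
Proof.
apply: functional_extensionality => G; apply: propositional_extensionality.
rewrite /=; split.
- move=> /ginv_cons [h1 /ginv_cons [h2 _]].
  apply/ginv_cons; split; [|apply/ginv_cons; split; last exact: ginv_nil].
  + apply: (canc2 hA hC); move: h1; rewrite /= /phi !mulmxA //.
  + rewrite /= /phi; transitivity (C *m (G *m (A *m B *m C) *m G) *m A).
      by rewrite !mulmxA.
    by rewrite h2.
- move=> /ginv_cons [h1 /ginv_cons [h2 _]].
  apply/ginv_cons; split; [|apply/ginv_cons; split; last exact: ginv_nil].
  + by move: h1; rewrite /= /phi => h1; rewrite -{3}h1 !mulmxA.
  + apply: (canc2 hC hA); transitivity (phi G *m B *m phi G); last exact: h2.
    by rewrite /phi !mulmxA.
Qed.

Lemma ES t : rev_set t A B C = ginv t B \o phi.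
Proof.
apply: functional_extensionality => G; apply: propositional_extensionality.
rewrite /rev_set /=; split.
  by move=> [G0 [h ->]]; rewrite -/(psi G0) phiK.
by move=> h; exists (phi G); split => //; rewrite -/(psi _) psiK.
Qed.

Lemma msub_o (P S : 'M[R]_(n,m) -> Prop) : msub (P \o phi) (S \o phi) = msub P S.
Proof.
apply: propositional_extensionality; split => h x.
  by rewrite -(phiK x) => /h.
exact: h.
Qed.
Lemma meq_o (P S : 'M[R]_(n,m) -> Prop) : meq (P \o phi) (S \o phi) = meq P S.
Proof.
apply: propositional_extensionality; split => h x.
  by rewrite -(phiK x); apply: h.
exact: h.
Qed.
Lemma mmeet_o (P S : 'M[R]_(n,m) -> Prop) : mmeet (P \o phi) (S \o phi) = mmeet P S.
Proof.
apply: propositional_extensionality; split => [[x hx]|[x hx]].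
  by exists (phi x).
by exists (psi x); rewrite /= phiK.
Qed.
End Tr.

Theorem theorem4p2 (R : numClosedFieldType) (m n : nat)
  (A : 'M[R]_m) (B : 'M[R]_(m, n)) (C : 'M[R]_n)
  (hm : (0 < m)%N) (hn : (0 < n)%N)
  (hA : A \in unitmx) (hC : C \in unitmx) :
  let M := A *m B *m C in
  let M12 := ginv [:: 1; 2]%N M in
  let S := fun t => rev_set t A B C in
  let rB := \rank B in
  (* (9) *)
  (msub M12 (S [:: 1]%N) /\
   (msub (S [:: 1]%N) M12 <-> meq M12 (S [:: 1]%N)) /\
   (meq M12 (S [:: 1]%N) <-> (rB = m \/ rB = n))) /\
  (* (10) *)
  meq M12 (S [:: 1; 2]%N) /\
  (* (11) *)
  (mmeet M12 (S [:: 1; 3]%N) /\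
   (msub (S [:: 1; 3]%N) M12 <-> (rB = m \/ rB = n)) /\
   (msub M12 (S [:: 1; 3]%N) <-> (B = 0 \/ rB = m)) /\
   (meq M12 (S [:: 1; 3]%N) <-> rB = m)) /\
  (* (12) *)
  (mmeet M12 (S [:: 1; 4]%N) /\
   (msub (S [:: 1; 4]%N) M12 <-> (rB = m \/ rB = n)) /\
   (msub M12 (S [:: 1; 4]%N) <-> (B = 0 \/ rB = n)) /\
   (meq M12 (S [:: 1; 4]%N) <-> rB = n)) /\
  (* (13) *)
  (msub (S [:: 1; 2; 3]%N) M12 /\
   (msub M12 (S [:: 1; 2; 3]%N) <-> meq M12 (S [:: 1; 2; 3]%N)) /\
   (meq M12 (S [:: 1; 2; 3]%N) <-> (B = 0 \/ rB = m))) /\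
  (* (14) *)
  (msub (S [:: 1; 2; 4]%N) M12 /\
   (msub M12 (S [:: 1; 2; 4]%N) <-> meq M12 (S [:: 1; 2; 4]%N)) /\
   (meq M12 (S [:: 1; 2; 4]%N) <-> (B = 0 \/ rB = n))) /\
  (* (15) *)
  (mmeet M12 (S [:: 1; 3; 4]%N) /\
   (msub (S [:: 1; 3; 4]%N) M12 <-> (rB = m \/ rB = n)) /\
   (msub M12 (S [:: 1; 3; 4]%N) <-> (B = 0 \/ (rB = m /\ m = n))) /\
   (meq M12 (S [:: 1; 3; 4]%N) <-> (rB = m /\ m = n))) /\
  (* (16) *)
  ((exists Bd, is_MP B Bd) /\
   forall Bd, is_MP B Bd -> M12 (invmx C *m Bd *m invmx A)).
Proof.
cbv zeta.
rewrite (E12 B hA hC) !(ES B hA hC) !(msub_o hA hC) !(meq_o hA hC) !(mmeet_o hA hC).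
have [h9 [h10 [h11 [h12 [h13 [h14 [h15 [h16a h16b]]]]]]]] := thmB B hm hn.
do 7! (split; first by []).
split; first by [].
move=> Bd hBd; rewrite /= -/(psi A C Bd) (phiK hA hC); exact: h16b.
Qed.
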